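(* (Explicit solutions of the Lotka–Volterra lattice.) Let $M,N\ge1$. Let $\tilde P$ be an invertible $N\times N$ complex matrix, $\tilde R$ an $N\times N$ complex matrix, $U$ an $M\times 1$ and $V$ an $N\times1$ complex vector, and put $Q=VU^T$ ($N\times M$). Let $A,B$ be $N\times N$ and $C,D$ be $M\times N$ complex matrices satisfying $$QC+\tilde RA=-A\tilde P^{-1},\qquad QD+\tilde RB=-B\tilde P .$$ For $n\in\mathbb{Z}$ and $t$ in an interval, define $$\tilde X_n(t)=A+B\tilde P^{\,n}e^{t(\tilde P^{-1}-\tilde P)},\qquad Y_n(t)=C+D\tilde P^{\,n}e^{t(\tilde P^{-1}-\tilde P)},$$ and assume $\tilde X_n(t)$ is invertible for all $n$ and $t$. Set $\varphi_n=U^T Y_n\tilde X_n^{-1}V$ and $a_n=\varphi_{n+1}-\varphi_n-1$. Then $a_n$ solves the Lotka–Volterra lattice equation $$\frac{d a_n}{dt}=a_{n+1}a_n-a_n a_{n-1}\qquad (n\in\mathbb{Z}).$$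
   Context: $U^T$ denotes the transpose of $U$; $\tilde P^{\,n}$ is the $n$-th power of $\tilde P$ (negative powers via $\tilde P^{-1}$), and $e^{(\cdot)}$ is the matrix exponential. Note that $\tilde P^{\,n}$ and $e^{t(\tilde P^{-1}-\tilde P)}$ commute. *)

(* Defs.v *)
From Stdlib Require Import Reals ZArith.
Open Scope R_scope.

Record Cplx := mkC { re : R; im : R }.
Definition C0 : Cplx := mkC 0 0.
Definition C1 : Cplx := mkC 1 0.
Definition Cr (x : R) : Cplx := mkC x 0.
Definition Cadd (a b : Cplx) : Cplx := mkC (re a + re b) (im a + im b).
Definition Copp (a : Cplx) : Cplx := mkC (- re a) (- im a).
Definition Csub (a b : Cplx) : Cplx := Cadd a (Copp b).
Definition Cmul (a b : Cplx) : Cplx :=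
  mkC (re a * re b - im a * im b) (re a * im b + im a * re b).

Fixpoint csum (k : nat) (f : nat -> Cplx) : Cplx :=
  match k with O => C0 | S k' => Cadd (csum k' f) (f k') end.

(* Matrices: entries indexed by (row, column); only entries with indices
   below the relevant dimensions matter. *)
Definition mat := nat -> nat -> Cplx.
Definition madd (A B : mat) : mat := fun i j => Cadd (A i j) (B i j).
Definition mopp (A : mat) : mat := fun i j => Copp (A i j).
Definition mscal (c : Cplx) (A : mat) : mat := fun i j => Cmul c (A i j).
Definition mmul (k : nat) (A B : mat) : mat :=
  fun i j => csum k (fun l => Cmul (A i l) (B l j)).
Definition mid : mat := fun i j => if Nat.eqb i j then C1 else C0.
Definition mtr (A : mat) : mat := fun i j => A j i.
Definition meq (m n : nat) (A B : mat) : Prop :=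
  forall i j, (i < m)%nat -> (j < n)%nat -> A i j = B i j.
Definition is_inverse (n : nat) (A Ainv : mat) : Prop :=
  meq n n (mmul n A Ainv) mid /\ meq n n (mmul n Ainv A) mid.

Fixpoint mpow (n : nat) (K : mat) (m : nat) : mat :=
  match m with O => mid | S m' => mmul n K (mpow n K m') end.
Definition mpowZ (n : nat) (P Pinv : mat) (z : Z) : mat :=
  match z with
  | Z0 => mid
  | Zpos p => mpow n P (Pos.to_nat p)
  | Zneg p => mpow n Pinv (Pos.to_nat p)
  end.

Fixpoint exp_partial (n : nat) (K : mat) (k : nat) : mat :=
  match k with
  | O => fun _ _ => C0
  | S k' => madd (exp_partial n K k')
                 (mscal (Cr (/ INR (fact k'))) (mpow n K k'))
  end.
Definition is_mexp (n : nat) (K E : mat) : Prop :=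
  forall i j, (i < n)%nat -> (j < n)%nat ->
    Un_cv (fun k => re (exp_partial n K k i j)) (re (E i j)) /\
    Un_cv (fun k => im (exp_partial n K k i j)) (im (E i j)).

Definition cderiv (f : R -> Cplx) (t : R) (l : Cplx) : Prop :=
  derivable_pt_lim (fun s => re (f s)) t (re l) /\
  derivable_pt_lim (fun s => im (f s)) t (im l).

(* X_n(t) = A + B P^n E(t), Y_n(t) = C + D P^n E(t), with E(t) = e^{t(P^-1 - P)} *)
Definition Xmat (N : nat) (A B P Pinv : mat) (E : R -> mat) (n : Z) (t : R) : mat :=
  madd A (mmul N B (mmul N (mpowZ N P Pinv n) (E t))).
Definition Ymat (N : nat) (Cm D P Pinv : mat) (E : R -> mat) (n : Z) (t : R) : mat :=
  madd Cm (mmul N D (mmul N (mpowZ N P Pinv n) (E t))).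
(* phi_n = U^T Y_n X_n^{-1} V  (a 1 x 1 matrix, read as a scalar) *)
Definition phi (M N : nat) (U V Cm D P Pinv : mat) (E : R -> mat)
  (Xinv : Z -> R -> mat) (n : Z) (t : R) : Cplx :=
  mmul M (mtr U) (mmul N (Ymat N Cm D P Pinv E n t) (mmul N (Xinv n t) V)) 0%nat 0%nat.
Definition aseq (M N : nat) (U V Cm D P Pinv : mat) (E : R -> mat)
  (Xinv : Z -> R -> mat) (n : Z) (t : R) : Cplx :=
  Csub (Csub (phi M N U V Cm D P Pinv E Xinv (n + 1)%Z t)
             (phi M N U V Cm D P Pinv E Xinv n t)) C1.

(* Main.v *)
From Stdlib Require Import Reals ZArith Lia Lra Field Ring Classical ClassicalEpsilon FunctionalExtensionality.
Require Import Defs.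
From HB Require Import structures.
From mathcomp Require all_boot all_algebra.
Open Scope R_scope.

Lemma Cext (a b : Cplx) : re a = re b -> im a = im b -> a = b.
Proof. destruct a, b; simpl; intros; subst; reflexivity. Qed.

Definition Cinv (z : Cplx) : Cplx :=
  mkC (re z / (re z * re z + im z * im z)) (- im z / (re z * re z + im z * im z)).
Definition Cdiv (a b : Cplx) : Cplx := Cmul a (Cinv b).

Lemma Cring_th : ring_theory C0 C1 Cadd Cmul Csub Copp (@eq Cplx).
Proof.
  constructor; intros; apply Cext; simpl; ring.
Qed.

Lemma C1_neq_C0 : C1 <> C0.
Proof. intro H. injection H. lra. Qed.

Lemma Cnorm_pos (z : Cplx) : z <> C0 -> 0 < re z * re z + im z * im z.
Proof.
  intros H. destruct z as [a b]; simpl.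
  destruct (Req_dec a 0) as [Ha|Ha]; destruct (Req_dec b 0) as [Hb|Hb].
  - subst. exfalso. apply H. reflexivity.
  - assert (0 < b*b) by (apply Rsqr_pos_lt; auto). nra.
  - assert (0 < a*a) by (apply Rsqr_pos_lt; auto). nra.
  - assert (0 < a*a) by (apply Rsqr_pos_lt; auto). nra.
Qed.

Lemma Cfield_th : field_theory C0 C1 Cadd Cmul Csub Copp Cdiv Cinv (@eq Cplx).
Proof.
  constructor.
  - exact Cring_th.
  - exact C1_neq_C0.
  - reflexivity.
  - intros p Hp. pose proof (Cnorm_pos p Hp) as Hn. apply Cext; simpl; field; lra.
Qed.

Add Field Cfield : Cfield_th.

Lemma dR_plus f g t a b : derivable_pt_lim f t a -> derivable_pt_lim g t b ->
  derivable_pt_lim (fun s => f s + g s) t (a + b).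
Proof. intros; exact (derivable_pt_lim_plus f g t a b H H0). Qed.
Lemma dR_minus f g t a b : derivable_pt_lim f t a -> derivable_pt_lim g t b ->
  derivable_pt_lim (fun s => f s - g s) t (a - b).
Proof. intros; exact (derivable_pt_lim_minus f g t a b H H0). Qed.
Lemma dR_mult f g t a b : derivable_pt_lim f t a -> derivable_pt_lim g t b ->
  derivable_pt_lim (fun s => f s * g s) t (a * g t + f t * b).
Proof. intros; exact (derivable_pt_lim_mult f g t a b H H0). Qed.
Lemma dR_opp f t a : derivable_pt_lim f t a -> derivable_pt_lim (fun s => - f s) t (- a).
Proof. intros; exact (derivable_pt_lim_opp f t a H). Qed.
Lemma dR_const c t : derivable_pt_lim (fun _ => c) t 0.
Proof. exact (derivable_pt_lim_const c t). Qed.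
Lemma dR_div f g t a b : derivable_pt_lim f t a -> derivable_pt_lim g t b -> g t <> 0 ->
  derivable_pt_lim (fun s => f s / g s) t ((a * g t - b * f t) / Rsqr (g t)).
Proof. intros; exact (derivable_pt_lim_div f g t a b H H0 H1). Qed.
Lemma dR_eq f t a b : a = b -> derivable_pt_lim f t a -> derivable_pt_lim f t b.
Proof. intros ->; auto. Qed.
Lemma dR_ext f g t a : (forall s, f s = g s) -> derivable_pt_lim f t a -> derivable_pt_lim g t a.
Proof. intros; eapply derivable_pt_lim_ext; eauto. Qed.

Lemma cderiv_eq f t a b : a = b -> cderiv f t a -> cderiv f t b.
Proof. intros ->; auto. Qed.
Lemma cderiv_ext f g t a : (forall s, f s = g s) -> cderiv f t a -> cderiv g t a.
Proof.
  intros H [H1 H2]; split; eapply dR_ext; try eassumption; intros; simpl; rewrite H; reflexivity.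
Qed.
Lemma cderiv_loc f g t a b l : a < t < b -> (forall z, a < z < b -> f z = g z) ->
  cderiv f t l -> cderiv g t l.
Proof.
  intros Ht H [H1 H2]; split; eapply derivable_pt_lim_locally_ext; try eassumption;
   intros z Hz; simpl; rewrite H; auto.
Qed.
Lemma cderiv_const c t : cderiv (fun _ => c) t C0.
Proof. split; simpl; apply dR_const. Qed.
Lemma cderiv_add f g t a b : cderiv f t a -> cderiv g t b ->
  cderiv (fun s => Cadd (f s) (g s)) t (Cadd a b).
Proof. intros [H1 H2] [H3 H4]; split; simpl; apply dR_plus; auto. Qed.
Lemma cderiv_opp f t a : cderiv f t a -> cderiv (fun s => Copp (f s)) t (Copp a).
Proof. intros [H1 H2]; split; simpl; apply dR_opp; auto. Qed.
Lemma cderiv_sub f g t a b : cderiv f t a -> cderiv g t b ->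
  cderiv (fun s => Csub (f s) (g s)) t (Csub a b).
Proof. intros; apply cderiv_add; auto; apply cderiv_opp; auto. Qed.
Lemma cderiv_mul f g t a b : cderiv f t a -> cderiv g t b ->
  cderiv (fun s => Cmul (f s) (g s)) t (Cadd (Cmul a (g t)) (Cmul (f t) b)).
Proof.
  intros [H1 H2] [H3 H4]; split; simpl.
  - eapply dR_eq; [|apply dR_minus; apply dR_mult; eassumption]. simpl; ring.
  - eapply dR_eq; [|apply dR_plus; apply dR_mult; eassumption]. simpl; ring.
Qed.
Lemma cderiv_inv f t a : f t <> C0 -> cderiv f t a ->
  cderiv (fun s => Cinv (f s)) t (Copp (Cmul a (Cinv (Cmul (f t) (f t))))).
Proof.
  intros Hf [H1 H2].
  pose proof (Cnorm_pos _ Hf) as Hn.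
  assert (Hd : derivable_pt_lim (fun s => re (f s) * re (f s) + im (f s) * im (f s)) t
     (re a * re (f t) + re (f t) * re a + (im a * im (f t) + im (f t) * im a))).
  { apply dR_plus; apply dR_mult; auto. }
  assert (Hz : re (f t) * re (f t) + im (f t) * im (f t) <> 0) by lra.
  unfold Cinv; split; simpl.
  - eapply dR_eq; [|apply dR_div; [exact H1|exact Hd|simpl; lra]].
    unfold Rsqr. field. split; [|auto].
    intro HH; apply Hz; nra.
  - eapply dR_eq; [|apply dR_div; [apply dR_opp; exact H2|exact Hd|simpl; lra]].
    unfold Rsqr. field. split; [|auto].
    intro HH; apply Hz; nra.
Qed.
Lemma cderiv_unique f t a b : cderiv f t a -> cderiv f t b -> a = b.
Proof.
  intros [H1 H2] [H3 H4]; apply Cext; eapply uniqueness_limite; eassumption.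
Qed.

Fixpoint ps (c : nat -> R) (k : nat) (x : R) : R :=
  match k with O => 0 | S k' => ps c k' x + / INR (fact k') * (x ^ k' * c k') end.

Lemma ps_deriv c k t :
  derivable_pt_lim (ps c (S k)) t (ps (fun m => c (S m)) k t).
Proof.
  induction k as [|k IH].
  - simpl. eapply dR_ext; [|apply (dR_const (0 + / 1 * (1 * c 0%nat)))]. intros; simpl; ring.
  - change (ps c (S (S k))) with (fun x => ps c (S k) x + / INR (fact (S k)) * (x ^ (S k) * c (S k))).
    eapply dR_eq; [|apply dR_plus; [exact IH|]].
    2:{ apply (dR_ext (fun x => / INR (fact (S k)) * c (S k) * x ^ (S k))).
        - intros; ring.
        - apply dR_mult; [apply dR_const|apply derivable_pt_lim_pow]. }
    simpl ps. simpl pred. rewrite fact_simpl, mult_INR.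
    assert (H1 : INR (fact k) <> 0) by (apply INR_fact_neq_0).
    assert (H2 : INR (S k) <> 0) by (apply not_0_INR; lia).
    field. auto.
Qed.

Lemma ps_SP c n x : ps c (S n) x = SP (fun m y => / INR (fact m) * (y ^ m * c m)) n x.
Proof.
  unfold SP. induction n as [|n IH]. - simpl. ring. - simpl in *. rewrite IH. reflexivity.
Qed.

Lemma pser_deriv (c : nat -> R) (L : R) (g g' : R -> R) :
  0 <= L -> (forall m, Rabs (c m) <= L ^ m) ->
  (forall x, Un_cv (fun k => ps c k x) (g x)) ->
  (forall x, Un_cv (fun k => ps (fun m => c (S m)) k x) (g' x)) ->
  forall t, derivable_pt_lim g t (g' t).
Proof.
  intros HL Hc Hg Hg' t.
  set (fn := fun m y => / INR (fact m) * (y ^ m * c (S m))).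
  set (r := mkposreal (Rabs t + 1) ltac:(pose proof (Rabs_pos t); lra)).
  assert (cv : forall x, {l | Un_cv (fun N => SP fn N x) l}).
  { intros x. exists (g' x). intros eps Heps. destruct (Hg' x eps Heps) as [N0 HN].
    exists N0. intros n Hn. unfold fn; rewrite <- ps_SP. apply HN. lia. }
  assert (Hcvn : CVN_r fn r).
  { exists (fun k => L * (/ INR (fact k) * (r * L) ^ k)).
    destruct (exist_exp (r * L)) as [l Hl].
    exists (L * l). split.
    - assert (Hu : Un_cv (fun n => L * sum_f_R0 (fun i => / INR (fact i) * (r * L) ^ i) n) (L * l)).
      { apply CV_mult. - intros e He; exists 0%nat; intros; unfold Rdist; rewrite Rminus_diag, Rabs_R0; lra.
        - exact Hl. }
      intros e He. destruct (Hu e He) as [N0 HN]. exists N0. intros n Hn.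
      replace (sum_f_R0 (fun k => Rabs (L * (/ INR (fact k) * (r * L) ^ k))) n)
        with (L * sum_f_R0 (fun i => / INR (fact i) * (r * L) ^ i) n). { apply HN; auto. }
      rewrite scal_sum. apply sum_eq. intros i _. rewrite Rabs_right. { ring. }
      apply Rle_ge. apply Rmult_le_pos; auto. apply Rmult_le_pos.
      + left; apply Rinv_0_lt_compat, INR_fact_lt_0.
      + apply pow_le. apply Rmult_le_pos; auto. left; apply cond_pos.
    - intros n y Hy. unfold Boule in Hy. rewrite Rminus_0_r in Hy. unfold fn.
      rewrite Rabs_mult, Rabs_mult, <- RPow_abs.
      rewrite Rabs_right by (left; apply Rinv_0_lt_compat, INR_fact_lt_0).
      rewrite Rpow_mult_distr.
      assert (H1 : Rabs y ^ n <= r ^ n) by (apply pow_incr; split; [apply Rabs_pos|lra]).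
      assert (H2 : Rabs (c (S n)) <= L ^ (S n)) by apply Hc.
      simpl pow in H2.
      assert (0 < / INR (fact n)) by (apply Rinv_0_lt_compat, INR_fact_lt_0).
      assert (0 <= Rabs y ^ n) by (apply pow_le, Rabs_pos).
      assert (0 <= L ^ n) by (apply pow_le; auto).
      assert (Hp : Rabs y ^ n * Rabs (c (S n)) <= r ^ n * (L * L ^ n)).
      { apply Rmult_le_compat; auto. apply Rabs_pos. }
      nra. }
  pose proof (CVN_CVU fn cv r Hcvn) as Hcvu.
  apply (CVU_derivable (fun n => ps c (S (S n))) (fun n => SP fn n) g g' 0 r).
  - eapply CVU_ext_lim; [exact Hcvu|]. intros x _. unfold SFL.
    destruct (cv x) as [l Hl]. eapply UL_sequence; [exact Hl|].
    intros eps Heps. destruct (Hg' x eps Heps) as [N0 HN].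
    exists N0. intros n Hn. unfold fn; rewrite <- ps_SP. apply HN. lia.
  - intros x _. intros eps Heps. destruct (Hg x eps Heps) as [N0 HN]. exists N0. intros n Hn. apply HN. lia.
  - intros n x _. unfold fn. eapply dR_eq; [|apply ps_deriv]. apply ps_SP.
  - unfold Boule; simpl. rewrite Rminus_0_r. lra.
Qed.

Lemma csum_ext k f g : (forall l, (l < k)%nat -> f l = g l) -> csum k f = csum k g.
Proof. induction k; simpl; intros H; auto. rewrite IHk, H; auto. Qed.
Lemma csum_add k f g : csum k (fun l => Cadd (f l) (g l)) = Cadd (csum k f) (csum k g).
Proof. induction k; simpl. - apply Cext; simpl; ring. - rewrite IHk. apply Cext; simpl; ring. Qed.
Lemma csum_scal k c f : csum k (fun l => Cmul c (f l)) = Cmul c (csum k f).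
Proof. induction k; simpl. - apply Cext; simpl; ring. - rewrite IHk. apply Cext; simpl; ring. Qed.
Lemma csum_zero k : csum k (fun _ => C0) = C0.
Proof. induction k; simpl; auto. rewrite IHk. apply Cext; simpl; ring. Qed.

Definition ccv (u : nat -> Cplx) (l : Cplx) : Prop :=
  Un_cv (fun k => re (u k)) (re l) /\ Un_cv (fun k => im (u k)) (im l).
Lemma cv_const c : Un_cv (fun _ => c) c.
Proof. intros e He; exists 0%nat; intros; unfold Rdist; rewrite Rminus_diag, Rabs_R0; lra. Qed.
Lemma ccv_const c : ccv (fun _ => c) c.
Proof. split; apply cv_const. Qed.
Lemma ccv_add u v a b : ccv u a -> ccv v b -> ccv (fun k => Cadd (u k) (v k)) (Cadd a b).
Proof. intros [H1 H2] [H3 H4]; split; simpl; apply CV_plus; auto. Qed.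
Lemma ccv_mul u v a b : ccv u a -> ccv v b -> ccv (fun k => Cmul (u k) (v k)) (Cmul a b).
Proof.
  intros [H1 H2] [H3 H4]; split; simpl.
  - apply CV_minus; apply CV_mult; auto.
  - apply CV_plus; apply CV_mult; auto.
Qed.
Lemma ccv_csum n (F : nat -> nat -> Cplx) (G : nat -> Cplx) :
  (forall l, (l < n)%nat -> ccv (fun k => F k l) (G l)) ->
  ccv (fun k => csum n (F k)) (csum n G).
Proof.
  induction n; intros H; simpl.
  - apply ccv_const.
  - apply ccv_add; auto.
Qed.
Lemma ccv_unique u a b : ccv u a -> ccv u b -> a = b.
Proof. intros [H1 H2] [H3 H4]; apply Cext; eapply UL_sequence; eauto. Qed.

Definition nC (z : Cplx) : R := Rabs (re z) + Rabs (im z).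
Lemma nC_pos z : 0 <= nC z.
Proof. unfold nC; pose proof (Rabs_pos (re z)); pose proof (Rabs_pos (im z)); lra. Qed.
Lemma nC_add a b : nC (Cadd a b) <= nC a + nC b.
Proof.
  unfold nC; simpl. pose proof (Rabs_triang (re a) (re b)); pose proof (Rabs_triang (im a) (im b)); lra.
Qed.
Lemma nC_mul a b : nC (Cmul a b) <= nC a * nC b.
Proof.
  unfold nC; simpl.
  pose proof (Rabs_triang (re a * re b) (- (im a * im b))).
  pose proof (Rabs_triang (re a * im b) (im a * re b)).
  rewrite Rabs_Ropp in H. rewrite !Rabs_mult in *.
  pose proof (Rabs_pos (re a)); pose proof (Rabs_pos (re b));
  pose proof (Rabs_pos (im a)); pose proof (Rabs_pos (im b)).
  unfold Rminus. nra.
Qed.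
Lemma re_le_nC z : Rabs (re z) <= nC z.
Proof. unfold nC; pose proof (Rabs_pos (im z)); lra. Qed.
Lemma im_le_nC z : Rabs (im z) <= nC z.
Proof. unfold nC; pose proof (Rabs_pos (re z)); lra. Qed.

Fixpoint RS (k : nat) (f : nat -> R) : R := match k with O => 0 | S k' => RS k' f + f k' end.
Lemma RS_ge0 k f : (forall l, 0 <= f l) -> 0 <= RS k f.
Proof. induction k; simpl; intros; [lra|]. pose proof (H k); pose proof (IHk H); lra. Qed.
Lemma RS_le k f g : (forall l, (l < k)%nat -> f l <= g l) -> RS k f <= RS k g.
Proof. induction k; simpl; intros H; [lra|]. pose proof (H k ltac:(lia)). pose proof (IHk ltac:(intros; apply H; lia)). lra. Qed.
Lemma RS_elem k f i : (forall l, 0 <= f l) -> (i < k)%nat -> f i <= RS k f.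
Proof.
  induction k; simpl; intros H Hi; [lia|].
  destruct (Nat.eq_dec i k) as [->|Hne].
  - pose proof (RS_ge0 k f H); lra.
  - pose proof (IHk H ltac:(lia)); pose proof (H k); lra.
Qed.
Lemma RS_scal k c f : RS k (fun l => f l * c) = RS k f * c.
Proof. induction k; simpl; [ring|rewrite IHk; ring]. Qed.
Lemma nC_csum k f : nC (csum k f) <= RS k (fun l => nC (f l)).
Proof.
  induction k; simpl. - unfold nC; simpl; rewrite Rabs_R0; lra.
  - pose proof (nC_add (csum k f) (f k)); lra.
Qed.

Lemma mpow_bound N K m i j : (i < N)%nat -> (j < N)%nat ->
  nC (mpow N K m i j) <= (RS N (fun a => RS N (fun b => nC (K a b)))) ^ m.
Proof.
  revert i j; induction m; intros i j Hi Hj; simpl.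
  - unfold mid; destruct (Nat.eqb i j); unfold nC; simpl; rewrite ?Rabs_R1, ?Rabs_R0; lra.
  - set (L := RS N (fun a => RS N (fun b => nC (K a b)))).
    unfold mmul. eapply Rle_trans; [apply nC_csum|].
    eapply Rle_trans.
    { apply (RS_le _ _ (fun l => nC (K i l) * L ^ m)). intros l Hl.
      eapply Rle_trans; [apply nC_mul|]. apply Rmult_le_compat_l; [apply nC_pos|]. apply IHm; auto. }
    rewrite RS_scal. apply Rmult_le_compat_r.
    + apply pow_le. apply RS_ge0; intros; apply RS_ge0; intros; apply nC_pos.
    + apply (RS_elem N (fun a => RS N (fun b => nC (K a b)))); auto.
      intros; apply RS_ge0; intros; apply nC_pos.
Qed.

Lemma mpow_scal N t K m i j :
  mpow N (mscal (Cr t) K) m i j = Cmul (Cr (t ^ m)) (mpow N K m i j).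
Proof.
  revert i j; induction m; intros i j; simpl.
  - apply Cext; simpl; ring.
  - unfold mmul. rewrite <- csum_scal. apply csum_ext. intros l _. rewrite IHm.
    unfold mscal. apply Cext; simpl; ring.
Qed.

Lemma exp_partial_re N t K k i j :
  re (exp_partial N (mscal (Cr t) K) k i j) = ps (fun m => re (mpow N K m i j)) k t.
Proof.
  induction k; simpl. - reflexivity.
  - rewrite IHk. rewrite mpow_scal. simpl. ring.
Qed.
Lemma exp_partial_im N t K k i j :
  im (exp_partial N (mscal (Cr t) K) k i j) = ps (fun m => im (mpow N K m i j)) k t.
Proof.
  induction k; simpl. - reflexivity.
  - rewrite IHk. rewrite mpow_scal. simpl. ring.
Qed.

Lemma Kexp_step N X K k i j :
  mmul N K (exp_partial N X (S k)) i j =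
  Cadd (mmul N K (exp_partial N X k) i j) (Cmul (Cr (/ INR (fact k))) (mmul N K (mpow N X k) i j)).
Proof.
  unfold mmul; cbn [exp_partial]. rewrite <- csum_scal, <- csum_add. apply csum_ext.
  intros; unfold madd, mscal; apply Cext; simpl; ring.
Qed.
Lemma Kmpow_scal N t K k i j :
  mmul N K (mpow N (mscal (Cr t) K) k) i j = Cmul (Cr (t ^ k)) (mpow N K (S k) i j).
Proof.
  simpl. unfold mmul. rewrite <- csum_scal. apply csum_ext. intros. rewrite mpow_scal.
  apply Cext; simpl; ring.
Qed.
Lemma Kexp_partial_re N t K k i j :
  re (mmul N K (exp_partial N (mscal (Cr t) K) k) i j) = ps (fun m => re (mpow N K (S m) i j)) k t.
Proof.
  induction k.
  - simpl. unfold mmul; simpl. rewrite (csum_ext N _ (fun _ => C0)) by (intros; apply Cext; simpl; ring).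
    rewrite csum_zero; reflexivity.
  - rewrite Kexp_step, Kmpow_scal. cbn [ps]. rewrite <- IHk. simpl. ring.
Qed.
Lemma Kexp_partial_im N t K k i j :
  im (mmul N K (exp_partial N (mscal (Cr t) K) k) i j) = ps (fun m => im (mpow N K (S m) i j)) k t.
Proof.
  induction k.
  - simpl. unfold mmul; simpl. rewrite (csum_ext N _ (fun _ => C0)) by (intros; apply Cext; simpl; ring).
    rewrite csum_zero; reflexivity.
  - rewrite Kexp_step, Kmpow_scal. cbn [ps]. rewrite <- IHk. simpl. ring.
Qed.

Lemma ccv_mmul_l N K (F : nat -> mat) G i j :
  (forall l, (l < N)%nat -> ccv (fun k => F k l j) (G l j)) ->
  ccv (fun k => mmul N K (F k) i j) (mmul N K G i j).
Proof.
  intros H. unfold mmul. apply ccv_csum. intros l Hl. apply ccv_mul; [apply ccv_const|auto].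
Qed.
Lemma ccv_mmul_r N K (F : nat -> mat) G i j :
  (forall l, (l < N)%nat -> ccv (fun k => F k i l) (G i l)) ->
  ccv (fun k => mmul N (F k) K i j) (mmul N G K i j).
Proof.
  intros H. unfold mmul. apply ccv_csum. intros l Hl. apply ccv_mul; [auto|apply ccv_const].
Qed.

Lemma E_deriv N K (E : R -> mat) :
  (forall t, is_mexp N (mscal (Cr t) K) (E t)) ->
  forall t i j, (i < N)%nat -> (j < N)%nat ->
  cderiv (fun s => E s i j) t (mmul N K (E t) i j).
Proof.
  intros HE t i j Hi Hj.
  set (L := RS N (fun a => RS N (fun b => nC (K a b)))).
  assert (HL : 0 <= L) by (apply RS_ge0; intros; apply RS_ge0; intros; apply nC_pos).
  assert (Hcv : forall x, ccv (fun k => mmul N K (exp_partial N (mscal (Cr x) K) k) i j) (mmul N K (E x) i j)).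
  { intros x. apply ccv_mmul_l. intros l Hl. destruct (HE x l j Hl Hj) as [H1 H2]. split; auto. }
  split.
  - apply (pser_deriv (fun m => re (mpow N K m i j)) L (fun s => re (E s i j)) (fun s => re (mmul N K (E s) i j))).
    + exact HL.
    + intros m. eapply Rle_trans; [apply re_le_nC|apply mpow_bound; auto].
    + intros x. destruct (HE x i j Hi Hj) as [H1 _].
      eapply Un_cv_ext; [|exact H1]. intros k. simpl. apply exp_partial_re.
    + intros x. destruct (Hcv x) as [H1 _].
      eapply Un_cv_ext; [|exact H1]. intros k. simpl. apply Kexp_partial_re.
  - apply (pser_deriv (fun m => im (mpow N K m i j)) L (fun s => im (E s i j)) (fun s => im (mmul N K (E s) i j))).
    + exact HL.
    + intros m. eapply Rle_trans; [apply im_le_nC|apply mpow_bound; auto].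
    + intros x. destruct (HE x i j Hi Hj) as [_ H1].
      eapply Un_cv_ext; [|exact H1]. intros k. simpl. apply exp_partial_im.
    + intros x. destruct (Hcv x) as [_ H1].
      eapply Un_cv_ext; [|exact H1]. intros k. simpl. apply Kexp_partial_im.
Qed.
Lemma ccv_ext u v a : (forall k, v k = u k) -> ccv u a -> ccv v a.
Proof.
  intros H [H1 H2]; split; eapply Un_cv_ext; try eassumption; intros k; simpl; rewrite H; reflexivity.
Qed.

Lemma scalar_fin (m0 m1 q dT p0 p1 x2 xm1 x1 x0 : Cplx) :
  Cmul q dT <> C0 ->
  m0 = Cmul m1 (Cadd C1 (Csub p0 p1)) ->
  Cmul m0 x0 = Cmul q (Cmul x2 dT) ->
  Cmul m1 xm1 = Cmul q (Cmul x1 dT) ->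
  Cmul x2 xm1 = Copp (Cmul (Cmul (Csub (Csub p1 p0) C1) x1) x0).
Proof.
  intros Hq H0 H1 H2.
  assert (Hq1 : q <> C0) by (intro E; apply Hq; rewrite E; apply Cext; simpl; ring).
  assert (Hq2 : dT <> C0) by (intro E; apply Hq; rewrite E; apply Cext; simpl; ring).
  assert (Ex2 : x2 = Cmul (Cmul m0 x0) (Cinv (Cmul q dT))).
  { rewrite H1. field. auto. }
  assert (Ex1 : x1 = Cmul (Cmul m1 xm1) (Cinv (Cmul q dT))).
  { rewrite H2. field. auto. }
  rewrite Ex2, Ex1, H0. field. auto.
Qed.

Lemma final_scalar (T2 Tm1 T1 T0 c p2 pm1 p1 p0 : Cplx) :
  T1 <> C0 -> T0 <> C0 -> Tm1 <> C0 ->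
  Cmul T2 Tm1 = Copp (Cmul (Cmul (Csub (Csub p1 p0) C1) T1) T0) ->
  Cadd (Cmul (Copp (Cadd (Cmul (Cmul T2 (Cadd c p2)) Tm1) (Cmul T2 (Cmul Tm1 (Cadd c pm1)))))
             (Cinv (Cmul T1 T0)))
       (Cmul (Copp (Cmul T2 Tm1))
             (Copp (Cmul (Cadd (Cmul (Cmul T1 (Cadd c p1)) T0) (Cmul T1 (Cmul T0 (Cadd c p0))))
                         (Cinv (Cmul (Cmul T1 T0) (Cmul T1 T0))))))
  = Csub (Cmul (Csub (Csub p2 p1) C1) (Csub (Csub p1 p0) C1))
         (Cmul (Csub (Csub p1 p0) C1) (Csub (Csub p0 pm1) C1)).
Proof.
  intros H1 H0 Hm1 HT.
  assert (E2 : T2 = Cmul (Copp (Cmul (Cmul (Csub (Csub p1 p0) C1) T1) T0)) (Cinv Tm1)).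
  { rewrite <- HT. field. exact Hm1. }
  rewrite E2. field. auto.
Qed.

Lemma a_scalar (T2 Tm1 T1 T0 a : Cplx) :
  T1 <> C0 -> T0 <> C0 ->
  Cmul T2 Tm1 = Copp (Cmul (Cmul a T1) T0) ->
  a = Cmul (Copp (Cmul T2 Tm1)) (Cinv (Cmul T1 T0)).
Proof.
  intros H1 H0 HT. rewrite HT. field. auto.
Qed.

Lemma Cmul_neq0 (a b : Cplx) : a <> C0 -> b <> C0 -> Cmul a b <> C0.
Proof.
  intros Ha Hb H. apply Ha.
  assert (E : a = Cmul (Cmul a b) (Cinv b)) by (field; exact Hb).
  rewrite E, H. apply Cext; simpl; ring.
Qed.

Set Warnings "-notation-overridden,-ambiguous-paths,-notation-incompatible-prefix,-redundant-canonical-projection".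
Module W.
Import all_boot all_algebra.
Import GRing.Theory.

Definition Ceqb (a b : Cplx) : bool :=
  if Req_EM_T (re a) (re b) then (if Req_EM_T (im a) (im b) then true else false) else false.

Lemma Ceqb_axiom : eq_axiom Ceqb.
Proof.
  intros [a b] [c d]; unfold Ceqb; simpl.
  destruct (Req_EM_T a c) as [->|H1]; destruct (Req_EM_T b d) as [->|H2];
    constructor; try reflexivity; intro H; injection H; intros; contradiction.
Qed.

HB.instance Definition _ := hasDecEq.Build Cplx Ceqb_axiom.

Definition Cfind (P : pred Cplx) (n : nat) : option Cplx :=
  match excluded_middle_informative (exists x, P x) with
  | left H => Some (proj1_sig (constructive_indefinite_description _ H))
  | right _ => None
  end.

Lemma Cfind_correct P n x : Cfind P n = Some x -> P x.
Proof.
  unfold Cfind. destruct excluded_middle_informative as [H|H]; [|discriminate].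
  intros E; injection E; intros <-. exact (proj2_sig (constructive_indefinite_description _ H)).
Qed.

Lemma Cfind_complete (P : pred Cplx) : (exists x, P x) -> exists n, Cfind P n.
Proof.
  intros H; exists 0%nat; unfold Cfind. destruct excluded_middle_informative; [reflexivity|contradiction].
Qed.

Lemma Cfind_ext (P Q : pred Cplx) : P =1 Q -> Cfind P =1 Cfind Q.
Proof.
  intros H. assert (P = Q) by (apply functional_extensionality; exact H). subst. intros n; reflexivity.
Qed.

HB.instance Definition _ := hasChoice.Build Cplx Cfind_correct Cfind_complete Cfind_ext.

Lemma Caddrr_A : associative Cadd. Proof. intros a b c; apply Cext; simpl; ring. Qed.
Lemma Caddrr_C : commutative Cadd. Proof. intros a b; apply Cext; simpl; ring. Qed.
Lemma Cadd0r : left_id C0 Cadd. Proof. intros a; apply Cext; simpl; ring. Qed.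
Lemma CaddNr : left_inverse C0 Copp Cadd. Proof. intros a; apply Cext; simpl; ring. Qed.
HB.instance Definition _ := GRing.isZmodule.Build Cplx Caddrr_A Caddrr_C Cadd0r CaddNr.

Lemma CmulA : associative Cmul. Proof. intros a b c; apply Cext; simpl; ring. Qed.
Lemma CmulC : commutative Cmul. Proof. intros a b; apply Cext; simpl; ring. Qed.
Lemma Cmul1 : left_id C1 Cmul. Proof. intros a; apply Cext; simpl; ring. Qed.
Lemma CmulDl : left_distributive Cmul Cadd. Proof. intros a b c; apply Cext; simpl; ring. Qed.
Lemma C1neq0 : C1 != C0. Proof. apply/eqP. exact C1_neq_C0. Qed.
HB.instance Definition _ := GRing.Zmodule_isComNzRing.Build Cplx CmulA CmulC Cmul1 CmulDl C1neq0.

Lemma CmulVf (x : Cplx) : x != 0%R -> (Cinv x * x)%R = 1%R.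
Proof. move/eqP=> H. change (Cmul (Cinv x) x = C1). field. exact H. Qed.
Lemma Cinv0 : Cinv 0%R = 0%R.
Proof. apply Cext; simpl; unfold Rdiv; ring. Qed.
HB.instance Definition _ := GRing.ComNzRing_isField.Build Cplx CmulVf Cinv0.

Lemma addE a b : (a + b)%R = Cadd a b. Proof. reflexivity. Qed.
Lemma mulE a b : (a * b)%R = Cmul a b. Proof. reflexivity. Qed.
Lemma oppE a : (- a)%R = Copp a. Proof. reflexivity. Qed.
Lemma zeroE : 0%R = C0. Proof. reflexivity. Qed.
Lemma oneE : 1%R = C1. Proof. reflexivity. Qed.

Local Open Scope ring_scope.

Definition toM m k (A : mat) : 'M[Cplx]_(m, k) := \matrix_(i < m, j < k) A i j.

Lemma toME m k A (i : 'I_m) (j : 'I_k) : toM m k A i j = A i j.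
Proof. by rewrite mxE. Qed.

Lemma csum_big k f : csum k f = \sum_(l < k) f l.
Proof.
  elim: k => [|k IH] /=; first by rewrite big_ord0.
  by rewrite big_ord_recr /= IH.
Qed.

Lemma toM_mmul m k p A B : toM m p (mmul k A B) = toM m k A *m toM k p B.
Proof.
  apply/matrixP=> i j; rewrite !mxE /mmul csum_big.
  by apply: eq_bigr => l _; rewrite !mxE.
Qed.
Lemma toM_madd m k A B : toM m k (madd A B) = toM m k A + toM m k B.
Proof. by apply/matrixP=> i j; rewrite !mxE. Qed.
Lemma toM_mopp m k A : toM m k (mopp A) = - toM m k A.
Proof. by apply/matrixP=> i j; rewrite !mxE. Qed.
Lemma toM_mscal m k c A : toM m k (mscal c A) = c *: toM m k A.
Proof. by apply/matrixP=> i j; rewrite !mxE. Qed.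
Lemma toM_mtr m k A : toM m k (mtr A) = (toM k m A)^T.
Proof. by apply/matrixP=> i j; rewrite !mxE. Qed.
Lemma toM_mid m : toM m m mid = 1%:M.
Proof.
  apply/matrixP=> i j; rewrite !mxE /mid.
  case: (PeanoNat.Nat.eqb_spec i j) => H.
  - have -> : i = j by apply: val_inj.
    by rewrite eqxx.
  - case: eqP => [E|_] //. by case: H; rewrite E.
Qed.
Lemma toM_const0 m k : toM m k (fun _ _ => C0) = 0.
Proof. by apply/matrixP=> i j; rewrite !mxE. Qed.

Lemma meq_toM m k A B : meq m k A B <-> toM m k A = toM m k B.
Proof.
  split.
  - move=> H; apply/matrixP=> i j; rewrite !mxE; apply: H; apply/ltP; exact: ltn_ord.
  - move=> H i j Hi Hj. move/ltP: Hi => Hi. move/ltP: Hj => Hj.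
    have := congr1 (fun M : 'M[Cplx]_(m,k) => M (Ordinal Hi) (Ordinal Hj)) H. by rewrite !mxE.
Qed.

Lemma toM_mpow n K m : toM n.+1 n.+1 (mpow n.+1 K m) = (toM n.+1 n.+1 K) ^+ m.
Proof.
  elim: m => [|m IH] /=; first by rewrite toM_mid expr0.
  by rewrite toM_mmul IH exprS.
Qed.


Lemma cderiv_bigsum (I : Type) (r : seq I) (P : pred I) (f : I -> R -> Cplx) (f' : I -> Cplx) t :
  (forall i, P i -> cderiv (f i) t (f' i)) ->
  cderiv (fun s => \sum_(i <- r | P i) f i s) t (\sum_(i <- r | P i) f' i).
Proof.
  move=> H. elim: r => [|x r IH].
  - apply: (cderiv_ext (fun _ => C0)); first by move=> s; rewrite big_nil.
    rewrite big_nil. exact: cderiv_const.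
  - case Px: (P x).
    + apply: (cderiv_ext (fun s => Cadd (f x s) (\sum_(i <- r | P i) f i s))).
      { by move=> s; rewrite big_cons Px. }
      rewrite big_cons Px. apply: cderiv_add => //. exact: H.
    + apply: (cderiv_ext (fun s => \sum_(i <- r | P i) f i s)).
      { by move=> s; rewrite big_cons Px. }
      by rewrite big_cons Px.
Qed.

Lemma cderiv_mulr f g t a b : cderiv f t a -> cderiv g t b ->
  cderiv (fun s => f s * g s) t (a * g t + f t * b).
Proof. exact: cderiv_mul. Qed.
Lemma cderiv_addr f g t a b : cderiv f t a -> cderiv g t b ->
  cderiv (fun s => f s + g s) t (a + b).
Proof. exact: cderiv_add. Qed.
Lemma cderiv_oppr f t a : cderiv f t a -> cderiv (fun s => - f s) t (- a).
Proof. exact: cderiv_opp. Qed.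
Lemma cderiv_subr f g t a b : cderiv f t a -> cderiv g t b ->
  cderiv (fun s => f s - g s) t (a - b).
Proof. move=> H1 H2; apply: cderiv_addr => //; exact: cderiv_oppr. Qed.
Lemma cderiv_constr c t : cderiv (fun _ => c) t 0.
Proof. exact: cderiv_const. Qed.
Lemma cderiv_scal c f t a : cderiv f t a -> cderiv (fun s => c * f s) t (c * a).
Proof.
  move=> H. apply: cderiv_eq; last exact: (cderiv_mulr _ _ _ _ _ (cderiv_constr c t) H).
  by rewrite mul0r add0r.
Qed.

Lemma cderiv_prod n (f : 'I_n -> R -> Cplx) (f' : 'I_n -> Cplx) t :
  (forall i, cderiv (f i) t (f' i)) ->
  cderiv (fun s => \prod_(i < n) f i s) t
    (\sum_(k < n) \prod_(i < n) (if i == k then f' i else f i t)).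
Proof.
  elim: n f f' => [|n IH] f f' H.
  - apply: (cderiv_ext (fun _ => 1)); first by move=> s; rewrite big_ord0.
    rewrite big_ord0. exact: cderiv_constr.
  - apply: (cderiv_ext (fun s => (\prod_(i < n) f (widen_ord (leqnSn n) i) s) * f ord_max s)).
    { by move=> s; rewrite big_ord_recr. }
    apply: cderiv_eq; last first.
    { apply: cderiv_mulr; last exact: H.
      exact: (IH (fun i => f (widen_ord (leqnSn n) i)) (fun i => f' (widen_ord (leqnSn n) i))). }
    rewrite [in RHS](big_ord_recr n) /= mulr_suml. congr (_ + _).
    + apply: eq_bigr => k _. rewrite (big_ord_recr n) /=.
      have -> : (ord_max == widen_ord (leqnSn n) k) = false.
      { apply/negbTE; apply/eqP => E. have := congr1 val E => /= E'.
        by move: (ltn_ord k); rewrite -E' ltnn. }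
      by congr (_ * _).
    + rewrite (big_ord_recr n) /= eqxx. congr (_ * _). apply: eq_bigr => i _.
      have -> : (widen_ord (leqnSn n) i == ord_max) = false.
      { apply/negbTE; apply/eqP => E. have := congr1 val E => /= E'.
        by move: (ltn_ord i); rewrite E' ltnn. }
      by [].
Qed.

Definition mderiv m k (F : R -> 'M[Cplx]_(m, k)) t (F' : 'M[Cplx]_(m, k)) : Prop :=
  forall i j, cderiv (fun s => F s i j) t (F' i j).
Arguments mderiv {m k}.

Lemma mderiv_add m k (F G : R -> 'M[Cplx]_(m, k)) t F' G' :
  mderiv F t F' -> mderiv G t G' -> mderiv (fun s => F s + G s) t (F' + G').
Proof.
  move=> H1 H2 i j. apply: (cderiv_ext (fun s => F s i j + G s i j)); first by move=> s; rewrite mxE.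
  rewrite mxE. exact: cderiv_addr.
Qed.
Lemma mderiv_opp m k (F : R -> 'M[Cplx]_(m, k)) t F' :
  mderiv F t F' -> mderiv (fun s => - F s) t (- F').
Proof.
  move=> H1 i j. apply: (cderiv_ext (fun s => - F s i j)); first by move=> s; rewrite mxE.
  rewrite mxE. exact: cderiv_oppr.
Qed.
Lemma mderiv_const m k (A : 'M[Cplx]_(m, k)) t : mderiv (fun _ => A) t 0.
Proof. move=> i j; rewrite mxE; exact: cderiv_constr. Qed.
Arguments mderiv_const {m k}.
Lemma mderiv_mul m k p (F : R -> 'M[Cplx]_(m, k)) (G : R -> 'M[Cplx]_(k, p)) t F' G' :
  mderiv F t F' -> mderiv G t G' -> mderiv (fun s => F s *m G s) t (F' *m G t + F t *m G').
Proof.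
  move=> H1 H2 i j.
  apply: (cderiv_ext (fun s => \sum_(l < k) F s i l * G s l j)); first by move=> s; rewrite mxE.
  rewrite !mxE -big_split /=. apply: cderiv_bigsum => l _. exact: cderiv_mulr.
Qed.
Lemma mderiv_eq m k (F : R -> 'M[Cplx]_(m, k)) t F1 F2 : F1 = F2 -> mderiv F t F1 -> mderiv F t F2.
Proof. by move=> ->. Qed.
Lemma mderiv_ext m k (F G : R -> 'M[Cplx]_(m, k)) t F' : (forall s, F s = G s) -> mderiv F t F' -> mderiv G t F'.
Proof. move=> E H i j. apply: (cderiv_ext (fun s => F s i j)); last exact: (H i j). by move=> s; rewrite E. Qed.
Lemma mderiv_lmul m k p (A : 'M[Cplx]_(m, k)) (G : R -> 'M[Cplx]_(k, p)) t G' :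
  mderiv G t G' -> mderiv (fun s => A *m G s) t (A *m G').
Proof.
  move=> H. have H2 := mderiv_mul _ _ _ _ _ _ _ _ (mderiv_const A t) H.
  rewrite mul0mx add0r in H2. exact: H2.
Qed.

Definition rowrep n (k : 'I_n) (A B : 'M[Cplx]_n) : 'M[Cplx]_n :=
  \matrix_(i, j) if i == k then B i j else A i j.
Arguments rowrep {n}.

Lemma det_deriv n (F : R -> 'M[Cplx]_n) t F' :
  mderiv F t F' -> cderiv (fun s => \det (F s)) t (\sum_(k < n) \det (rowrep k (F t) F')).
Proof.
  move=> H.
  apply: cderiv_eq; last first.
  { apply: cderiv_bigsum => s _.
    apply: cderiv_scal. apply: cderiv_prod => i. exact: H. }
  under eq_bigr do rewrite mulr_sumr. rewrite exchange_big /=. apply: eq_bigr => k _. rewrite /determinant.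
  apply: eq_bigr => s _. congr (_ * _). apply: eq_bigr => i _. by rewrite mxE.
Qed.

Lemma det_rowrep n (A B : 'M[Cplx]_n) k : \det (rowrep k A B) = (B *m \adj A) k k.
Proof.
  rewrite (expand_det_row _ k) mxE. apply: eq_bigr => j _.
  rewrite !mxE eqxx. congr (_ * _).
  rewrite /cofactor. congr (_ * _). congr (\det _).
  apply/matrixP=> i l. rewrite !mxE.
  by rewrite eq_sym (negbTE (neq_lift k i)).
Qed.

Lemma det_deriv_unit n (F : R -> 'M[Cplx]_n) t F' :
  mderiv F t F' -> F t \in unitmx ->
  cderiv (fun s => \det (F s)) t (\det (F t) * \tr (F' *m invmx (F t))).
Proof.
  move=> H U. apply: cderiv_eq; last exact: det_deriv.
  under eq_bigr do rewrite det_rowrep.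
  have -> : \adj (F t) = \det (F t) *: invmx (F t).
  { rewrite /invmx U scalerA mulfV ?scale1r //. }
  rewrite -scalemxAr -mxtraceZ. by [].
Qed.


Lemma det_rank1 n (x : 'M[Cplx]_(n, 1)) (y : 'M[Cplx]_(1, n)) :
  \det (1%:M + x *m y) = 1 + (y *m x) 0 0.
Proof.
  have E1 : block_mx 1%:M 0 y 1%:M *m block_mx 1%:M (-x) 0 (1%:M + y *m x)
            = block_mx (1%:M : 'M_n) (-x) y (1%:M : 'M_1).
  { rewrite mulmx_block !mul1mx !mul0mx !mulmx1 ?addr0 ?add0r.
    by rewrite mulmxN addrCA addNr addr0. }
  have E2 : block_mx (1%:M + x *m y) (-x) 0 1%:M *m block_mx 1%:M 0 y 1%:M
            = block_mx (1%:M : 'M_n) (-x) y (1%:M : 'M_1).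
  { rewrite mulmx_block !mul1mx !mul0mx !mulmx1 ?mulmx0 ?addr0 ?add0r.
    by rewrite mulNmx addrK. }
  have := congr1 determinant (etrans E1 (esym E2)).
  rewrite !det_mulmx (det_lblock (1%:M : 'M[Cplx]_n) y (1%:M : 'M[Cplx]_1)).
  rewrite (det_ublock (1%:M : 'M[Cplx]_n) (-x) (1%:M + y *m x)).
  rewrite (det_ublock (1%:M + x *m y) (-x) (1%:M : 'M[Cplx]_1)) !det1 !mul1r !mulr1.
  by rewrite det_mx11 !mxE => ->.
Qed.

Lemma detN n (A : 'M[Cplx]_n) : \det (- A) = (-1) ^+ n * \det A.
Proof. by rewrite -scaleN1r detZ. Qed.


Section Main.
Variables (M n : nat).
Variables (P Pinv Rt A B Cm D U V : mat) (E : R -> mat).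
Hypothesis HP : is_inverse n.+1 P Pinv.
Hypothesis HS1 : meq n.+1 n.+1 (madd (mmul M (mmul 1 V (mtr U)) Cm) (mmul n.+1 Rt A)) (mopp (mmul n.+1 A Pinv)).
Hypothesis HS2 : meq n.+1 n.+1 (madd (mmul M (mmul 1 V (mtr U)) D) (mmul n.+1 Rt B)) (mopp (mmul n.+1 B P)).
Hypothesis HE : forall t : R, is_mexp n.+1 (mscal (Cr t) (madd Pinv (mopp P))) (E t).

Local Notation N := n.+1.
Definition Pm : 'M[Cplx]_N := toM N N P.
Definition Ti : 'M[Cplx]_N := toM N N Pinv.
Definition Rm : 'M[Cplx]_N := toM N N Rt.
Definition Am : 'M[Cplx]_N := toM N N A.
Definition Bm : 'M[Cplx]_N := toM N N B.
Definition Cmm : 'M[Cplx]_(M, N) := toM M N Cm.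
Definition Dm : 'M[Cplx]_(M, N) := toM M N D.
Definition Um : 'M[Cplx]_(M, 1) := toM M 1 U.
Definition Vm : 'M[Cplx]_(N, 1) := toM N 1 V.
Definition Em (t : R) : 'M[Cplx]_N := toM N N (E t).

Definition Pz (z : Z) : 'M[Cplx]_N :=
  if Z.leb 0 z then Pm ^+ Z.to_nat z else Ti ^+ Z.to_nat (Z.opp z).

Lemma PT : Pm * Ti = 1.
Proof. have [H1 _] := HP. move/meq_toM: H1. by rewrite toM_mmul toM_mid. Qed.
Lemma TP : Ti * Pm = 1.
Proof. have [_ H1] := HP. move/meq_toM: H1. by rewrite toM_mmul toM_mid. Qed.

Lemma toM_mpowZ z : toM N N (mpowZ N P Pinv z) = Pz z.
Proof.
  rewrite /Pz; case: z => [|p|p] /=.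
  - by rewrite toM_mid expr0.
  - by rewrite toM_mpow.
  - by rewrite toM_mpow.
Qed.

Lemma Pz_mulP z : Pz z * Pm = Pz (Z.add z 1).
Proof.
  rewrite /Pz. case: (Z.leb_spec 0 z) => Hz.
  - have -> : Z.leb 0 (Z.add z 1) = true by apply/Z.leb_le; lia.
    have -> : Z.to_nat (Z.add z 1) = (Z.to_nat z).+1 by lia.
    by rewrite exprSr.
  - have [k Hk] : exists k, Z.to_nat (Z.opp z) = k.+1 by exists (Z.to_nat (Z.opp z)).-1; lia.
    rewrite Hk exprSr -mulrA TP mulr1.
    case: (Z.leb_spec 0 (Z.add z 1)) => Hz1.
    + have Hk0 : k = 0%N by lia. subst k.
      have -> : Z.to_nat (Z.add z 1) = 0%N by lia.
      by rewrite !expr0.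
    + by have -> : Z.to_nat (Z.opp (Z.add z 1)) = k by lia.
Qed.

Lemma Pz_mulT z : Pz z * Ti = Pz (Z.sub z 1).
Proof.
  rewrite /Pz. case: (Z.leb_spec 0 (Z.sub z 1)) => Hz.
  - have -> : Z.leb 0 z = true by apply/Z.leb_le; lia.
    have -> : Z.to_nat z = (Z.to_nat (Z.sub z 1)).+1 by lia.
    by rewrite exprSr -mulrA PT mulr1.
  - case: (Z.leb_spec 0 z) => Hz0.
    + have -> : Z.to_nat z = 0%N by lia.
      have -> : Z.to_nat (Z.opp (Z.sub z 1)) = 1%N by lia.
      by rewrite expr0 mul1r expr1.
    + have -> : Z.to_nat (Z.opp (Z.sub z 1)) = (Z.to_nat (Z.opp z)).+1 by lia.
      by rewrite exprSr.
Qed.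

Lemma comm_PT : GRing.comm Pm Ti.
Proof. by rewrite /GRing.comm PT TP. Qed.
Lemma comm_Pz_P z : GRing.comm Pm (Pz z).
Proof.
  rewrite /Pz; case: ifP => _; apply: commrX; [exact: commr_refl|exact: comm_PT].
Qed.
Lemma comm_Pz_T z : GRing.comm Ti (Pz z).
Proof.
  rewrite /Pz; case: ifP => _; apply: commrX; [exact: commr_sym comm_PT|exact: commr_refl].
Qed.

Lemma commrZ' (x y : 'M[Cplx]_N) (c : Cplx) : GRing.comm x y -> GRing.comm x (c *: y).
Proof. rewrite /GRing.comm => H. by rewrite -scalerAr -scalerAl H. Qed.

Lemma exp_partial_comm (X : mat) k :
  GRing.comm Pm (toM N N X) -> GRing.comm Pm (toM N N (exp_partial N X k)).
Proof.
  move=> H. elim: k => [|k IH] /=.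
  - rewrite toM_const0. exact: commr0.
  - rewrite toM_madd toM_mscal toM_mpow. apply: commrD => //. apply: commrZ'. exact: commrX.
Qed.

Lemma Em_comm t : Pm * Em t = Em t * Pm.
Proof.
  set X := mscal (Cr t) (madd Pinv (mopp P)).
  have HX : GRing.comm Pm (toM N N X).
  { rewrite /X toM_mscal toM_madd toM_mopp. apply: commrZ'. apply: commrD.
    - exact: comm_PT.
    - apply: commrN. exact: commr_refl. }
  apply/matrixP => i j.
  rewrite -!mulmxE /Em -!toM_mmul !toME.
  have Hi : (i < N)%coq_nat by apply/ltP.
  have Hj : (j < N)%coq_nat by apply/ltP.
  apply: (ccv_unique (fun k => mmul N P (exp_partial N X k) i j)).
  - apply: ccv_mmul_l => l Hl. have [H1 H2] := HE t l j Hl Hj. by split.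
  - apply: (ccv_ext (fun k => mmul N (exp_partial N X k) P i j)).
    + move=> k. have := exp_partial_comm X k HX. rewrite /GRing.comm -!mulmxE -!toM_mmul => E1.
      have := congr1 (fun M0 : 'M[Cplx]_N => M0 i j) E1. by rewrite !toME.
    + apply: ccv_mmul_r => l Hl. have [H1 H2] := HE t i l Hi Hl. by split.
Qed.

Lemma Em_commT t : Ti * Em t = Em t * Ti.
Proof.
  rewrite -[Ti * Em t]mulr1 -PT mulrA -(mulrA Ti (Em t) Pm) -Em_comm.
  by rewrite mulrA TP mul1r.
Qed.

Definition Kz z t : 'M[Cplx]_N := Pz z * Em t.
Definition Xz z t : 'M[Cplx]_N := Am + Bm * Kz z t.
Definition Yz z t : 'M[Cplx]_(M, N) := Cmm + Dm *m Kz z t.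
Definition Kd : 'M[Cplx]_N := Ti - Pm.

Lemma toM_Xmat z t : toM N N (Xmat N A B P Pinv E z t) = Xz z t.
Proof. by rewrite /Xmat toM_madd !toM_mmul toM_mpowZ. Qed.
Lemma toM_Ymat z t : toM M N (Ymat N Cm D P Pinv E z t) = Yz z t.
Proof. by rewrite /Ymat toM_madd !toM_mmul toM_mpowZ. Qed.

Lemma Em_deriv t : mderiv Em t (Kd * Em t).
Proof.
  move=> i j.
  have Hi : (i < N)%coq_nat by apply/ltP.
  have Hj : (j < N)%coq_nat by apply/ltP.
  have H := E_deriv N (madd Pinv (mopp P)) E HE t i j Hi Hj.
  apply: (cderiv_ext (fun s => E s i j)); first by move=> s; rewrite /Em toME.
  have -> : (Kd * Em t) i j = mmul N (madd Pinv (mopp P)) (E t) i j.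
  { by rewrite /Kd /Em -mulmxE -toM_mopp -toM_madd -toM_mmul toME. }
  exact: H.
Qed.

Lemma Kz_T z t : Kz z t * Ti = Kz (Z.sub z 1) t.
Proof. by rewrite /Kz -mulrA -Em_commT mulrA Pz_mulT. Qed.
Lemma Kz_P z t : Kz z t * Pm = Kz (Z.add z 1) t.
Proof. by rewrite /Kz -mulrA -Em_comm mulrA Pz_mulP. Qed.
Lemma P_Kz z t : Pm * Kz z t = Kz (Z.add z 1) t.
Proof. by rewrite /Kz mulrA comm_Pz_P -Pz_mulP. Qed.

Lemma Kz_deriv z t : mderiv (Kz z) t (Kz (Z.sub z 1) t - Kz (Z.add z 1) t).
Proof.
  apply: mderiv_eq; last exact: (mderiv_lmul _ _ _ (Pz z) Em t _ (Em_deriv t)).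
  by rewrite mulmxE /Kd mulrA mulrBr Pz_mulT Pz_mulP mulrBl.
Qed.

Lemma Xz_deriv z t : mderiv (Xz z) t (Xz (Z.sub z 1) t - Xz (Z.add z 1) t).
Proof.
  have H := mderiv_add _ _ _ _ t _ _ (mderiv_const Am t) (mderiv_lmul _ _ _ Bm (Kz z) t _ (Kz_deriv z t)).
  apply: mderiv_eq; last exact: H.
  rewrite /Xz add0r mulmxE mulrBr. by rewrite opprD addrACA addrN add0r.
Qed.

Definition ent {m k} (X : 'M[Cplx]_(m, k)) (i : 'I_m) (j : 'I_k) : Cplx := X i j.
Lemma ent_add m k (X Y : 'M[Cplx]_(m, k)) i j : ent (X + Y) i j = Cadd (ent X i j) (ent Y i j).
Proof. by rewrite /ent mxE. Qed.
Lemma ent_opp m k (X : 'M[Cplx]_(m, k)) i j : ent (- X) i j = Copp (ent X i j).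
Proof. by rewrite /ent mxE. Qed.
Lemma ent_zero m k i j : ent (0 : 'M[Cplx]_(m, k)) i j = C0.
Proof. by rewrite /ent mxE. Qed.

Ltac mxlin := let i := fresh "i" in let j := fresh "j" in
  apply/matrixP => i j;
  match goal with |- fun_of_matrix ?a i j = fun_of_matrix ?b i j => change (ent a i j = ent b i j) end;
  repeat rewrite ?ent_add ?ent_opp ?ent_zero;
  repeat match goal with |- context [ent ?X ?a ?b] =>
    let e := fresh "e" in set e := ent X a b; clearbody e end;
  ring.

Lemma Kz_Tm z t : Kz z t *m Ti = Kz (Z.sub z 1) t. Proof. exact: Kz_T. Qed.
Lemma Kz_Pm z t : Kz z t *m Pm = Kz (Z.add z 1) t. Proof. exact: Kz_P. Qed.
Lemma P_Kzm z t : Pm *m Kz z t = Kz (Z.add z 1) t. Proof. exact: P_Kz. Qed.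

Lemma HS1m : Vm *m Um^T *m Cmm = - (Am *m Ti) - Rm *m Am.
Proof.
  move/meq_toM: HS1. rewrite toM_madd toM_mopp !toM_mmul toM_mtr -/Vm -/Um -/Cmm -/Rm -/Am -/Ti.
  move=> H. rewrite -H. mxlin.
Qed.
Lemma HS2m : Vm *m Um^T *m Dm = - (Bm *m Pm) - Rm *m Bm.
Proof.
  move/meq_toM: HS2. rewrite toM_madd toM_mopp !toM_mmul toM_mtr -/Vm -/Um -/Dm -/Rm -/Bm -/Pm.
  move=> H. rewrite -H. mxlin.
Qed.

Lemma HS1m' : Vm *m (Um^T *m Cmm) = - (Am *m Ti) - Rm *m Am.
Proof. by rewrite mulmxA HS1m. Qed.
Lemma HS2m' (X : 'M[Cplx]_N) : Vm *m (Um^T *m (Dm *m X)) = - (Bm *m (Pm *m X)) - Rm *m (Bm *m X).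
Proof. by rewrite !mulmxA HS2m mulmxBl mulNmx. Qed.

Lemma Srel z t : Rm *m Xz z t + Vm *m (Um^T *m Yz z t) = - (Xz (Z.add z 2) t *m Ti).
Proof.
  rewrite /Xz /Yz -!mulmxE !mulmxDr !mulmxDl HS1m' HS2m' P_Kzm.
  rewrite -(mulmxA Bm (Kz (Z.add z 2) t) Ti) Kz_Tm.
  have -> : Z.sub (Z.add z 2) 1 = Z.add z 1 by lia.
  mxlin.
Qed.

Lemma X3T z t : Xz (Z.add z 1) t *m (1 + Ti) = Xz z t + Xz (Z.add z 2) t *m Ti.
Proof.
  rewrite /Xz -!mulmxE !mulmxDr !mulmxDl !mulmx1.
  rewrite -(mulmxA Bm (Kz (Z.add z 1) t) Ti) -(mulmxA Bm (Kz (Z.add z 2) t) Ti) !Kz_Tm.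
  have -> : Z.sub (Z.add z 2) 1 = Z.add z 1 by lia.
  have -> : Z.sub (Z.add z 1) 1 = z by lia.
  mxlin.
Qed.

Lemma Dstar z t : Xz (Z.sub z 1) t - Xz (Z.add z 1) t =
   Rm *m Xz z t + Xz z t *m Ti + Vm *m (Um^T *m Yz z t).
Proof.
  have -> : Rm *m Xz z t + Xz z t *m Ti + Vm *m (Um^T *m Yz z t) =
     (Rm *m Xz z t + Vm *m (Um^T *m Yz z t)) + Xz z t *m Ti by mxlin.
  rewrite Srel.
  rewrite /Xz -!mulmxE !mulmxDl.
  rewrite -(mulmxA Bm (Kz z t) Ti) -(mulmxA Bm (Kz (Z.add z 2) t) Ti) !Kz_Tm.
  have -> : Z.sub (Z.add z 2) 1 = Z.add z 1 by lia.
  mxlin.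
Qed.

Definition Iz z t : 'M[Cplx]_N := invmx (Xz z t).
Definition wz z t : 'M[Cplx]_(1, N) := Um^T *m Yz z t.
Definition pz z t : 'M[Cplx]_1 := wz z t *m Iz z t *m Vm.
Definition phiz z t : Cplx := pz z t 0 0.
Definition tau z t : Cplx := \det (Xz z t).

Lemma trace11 (X : 'M[Cplx]_1) : \tr X = X 0 0.
Proof. by rewrite /mxtrace big_ord1. Qed.

Lemma tau_deriv z t : Xz z t \in unitmx ->
  cderiv (tau z) t (tau z t * (\tr Rm + \tr Ti + phiz z t)).
Proof.
  move=> HU. apply: cderiv_eq; last exact: (det_deriv_unit _ (Xz z) t _ (Xz_deriv z t) HU).
  rewrite /tau /phiz /pz /wz /Iz Dstar. move: HU. move: (Xz z t) => X HU.
  rewrite !mulmxDl !mxtraceD. congr (_ * _).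
  rewrite (mulmxK HU) (mxtrace_mulC (X *m Ti)) (mulmxA (invmx X) X Ti) (mulVmx HU) mul1mx.
  by rewrite -(mulmxA Vm) (mxtrace_mulC Vm) trace11.
Qed.

Lemma Xinv_conv (Xi : mat) z t : is_inverse N (Xmat N A B P Pinv E z t) Xi ->
  Xz z t \in unitmx /\ toM N N Xi = Iz z t.
Proof.
  move=> [H1 H2]. move/meq_toM: H1. rewrite toM_mmul toM_mid toM_Xmat => H1.
  have [U1 _] := mulmx1_unit H1. split => //.
  by rewrite /Iz -[toM N N Xi](mulKmx U1) H1 mulmx1.
Qed.

Lemma phi_conv (Xinv : Z -> R -> mat) z t : toM N N (Xinv z t) = Iz z t ->
  phi M N U V Cm D P Pinv E Xinv z t = phiz z t.
Proof.
  move=> H. rewrite /phi /phiz /pz /wz.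
  have -> : mmul M (mtr U) (mmul N (Ymat N Cm D P Pinv E z t) (mmul N (Xinv z t) V)) 0%N 0%N
          = toM 1 1 (mmul M (mtr U) (mmul N (Ymat N Cm D P Pinv E z t) (mmul N (Xinv z t) V))) 0 0.
  { by rewrite toME. }
  by rewrite !toM_mmul toM_mtr toM_Ymat H !mulmxA.
Qed.

Ltac mxnorm := repeat rewrite ?mulmxDl ?mulmxDr ?mulmxBl ?mulmxBr ?mulNmx ?mulmxN ?opprK ?mulmxA ?mulmx1 ?mul1mx.

Lemma key_identity (Xm1 X0 X1 X2 X3 TT PP : 'M[Cplx]_N) :
  TT *m PP = 1%:M -> X0 \in unitmx -> X1 \in unitmx ->
  X0 *m (1%:M + TT) = Xm1 + X1 *m TT -> X2 *m (1%:M + TT) = X1 + X3 *m TT ->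
  (- (X2 *m TT *m invmx X0)) *m (- (Xm1 *m PP *m invmx X1)) - 1%:M
  = - (X2 *m TT *m invmx X0) + X3 *m TT *m invmx X1.
Proof.
  move=> TP0 U0 U1 H1 H2.
  have hm1 : Xm1 = X0 *m (1%:M + TT) - X1 *m TT by rewrite H1; mxlin.
  have h3 : X3 *m TT = X2 *m (1%:M + TT) - X1 by rewrite H2; mxlin.
  have TPr : forall Y : 'M[Cplx]_N, Y *m TT *m PP = Y by move=> Y; rewrite -mulmxA TP0 mulmx1.
  have I0r : forall Y : 'M[Cplx]_N, Y *m invmx X0 *m X0 = Y by move=> Y; rewrite (mulmxKV U0).
  have I1r : forall Y : 'M[Cplx]_N, Y *m X1 *m invmx X1 = Y by move=> Y; rewrite (mulmxK U1).
  rewrite h3 hm1. mxnorm. rewrite !I0r !TPr !I1r (mulmxV U1).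
  mxlin.
Qed.

Lemma Mdef_gen (RR TT X Xn : 'M[Cplx]_N) (VV : 'M[Cplx]_(N, 1)) (w : 'M[Cplx]_(1, N)) :
  X \in unitmx -> RR *m X + VV *m w = - (Xn *m TT) ->
  - (Xn *m TT *m invmx X) = RR + VV *m (w *m invmx X).
Proof.
  move=> HX H. have := congr1 (mulmx^~ (invmx X)) H => /=.
  by rewrite mulmxDl (mulmxK HX) mulNmx -(mulmxA VV) => <-.
Qed.

Lemma det_step (m0 m1 Mi : 'M[Cplx]_N) (VV : 'M[Cplx]_(N, 1)) (s : 'M[Cplx]_(1, N)) :
  m1 *m Mi = 1%:M -> m0 = m1 + VV *m s ->
  \det m0 = \det m1 * (1 + (s *m (Mi *m VV)) 0 0).
Proof.
  move=> H1 H2.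
  have -> : m0 = m1 *m (1%:M + (Mi *m VV) *m s).
  { by rewrite mulmxDr mulmx1 !mulmxA H1 mul1mx. }
  by rewrite det_mulmx det_rank1.
Qed.

Lemma cancelV (VV : 'M[Cplx]_(N, 1)) (c1 c2 : 'M[Cplx]_1) :
  VV *m c1 = VV *m c2 -> (VV = 0 -> c1 = c2) -> c1 = c2.
Proof.
  move=> H H0. case: (boolP [exists i, VV i 0 != 0]) => [/existsP [i Hi]|Hn].
  - have := congr1 (fun M0 : 'M[Cplx]_(N, 1) => M0 i 0) H.
    rewrite !mxE !big_ord1 => E1.
    have E2 : c1 0 0 = c2 0 0 by apply: (mulfI Hi).
    apply/matrixP => a b. by rewrite !ord1.
  - apply: H0. apply/matrixP => a b. rewrite ord1 mxE.
    apply/eqP. move: Hn. rewrite negb_exists => /forallP /(_ a). by rewrite negbK.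
Qed.

Lemma det_X_rel (m X Xn TT : 'M[Cplx]_N) :
  X \in unitmx -> m = - (Xn *m TT *m invmx X) ->
  \det m * \det X = (-1) ^+ N * (\det Xn * \det TT).
Proof.
  move=> HX ->. by rewrite -det_mulmx mulNmx (mulmxKV HX) detN det_mulmx.
Qed.

Lemma entB m k (X Y : 'M[Cplx]_(m, k)) i j : (X - Y) i j = X i j - Y i j.
Proof. by rewrite !mxE. Qed.

Lemma det_abstract (RR TT PP : 'M[Cplx]_N) (VV : 'M[Cplx]_(N, 1)) (wm1 w0 w1 : 'M[Cplx]_(1, N))
  (Xm1 X0 X1 X2 X3 : 'M[Cplx]_N) :
  TT *m PP = 1%:M ->
  Xm1 \in unitmx -> X0 \in unitmx -> X1 \in unitmx ->
  RR *m Xm1 + VV *m wm1 = - (X1 *m TT) ->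
  RR *m X0 + VV *m w0 = - (X2 *m TT) ->
  RR *m X1 + VV *m w1 = - (X3 *m TT) ->
  X0 *m (1%:M + TT) = Xm1 + X1 *m TT ->
  X2 *m (1%:M + TT) = X1 + X3 *m TT ->
  \det X2 * \det Xm1 =
  - (((w1 *m invmx X1 *m VV) 0 0 - (w0 *m invmx X0 *m VV) 0 0 - 1) * \det X1 * \det X0).
Proof.
  move=> TP0 Um1 U0 U1 Sm1 S0 S1 H1 H2.
  have Em1 := Mdef_gen _ _ _ _ _ _ Um1 Sm1.
  have E0 := Mdef_gen _ _ _ _ _ _ U0 S0.
  have E1 := Mdef_gen _ _ _ _ _ _ U1 S1.
  have hMinv : (- (X1 *m TT *m invmx Xm1)) *m (- (Xm1 *m PP *m invmx X1)) = 1%:M.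
  { rewrite mulNmx mulmxN opprK !mulmxA (mulmxKV Um1) -(mulmxA X1 TT PP) TP0 mulmx1.
    exact: mulmxV. }
  set s := w0 *m invmx X0 - wm1 *m invmx Xm1.
  have hm0 : - (X2 *m TT *m invmx X0) = - (X1 *m TT *m invmx Xm1) + VV *m s.
  { rewrite E0 Em1 /s mulmxBr. mxlin. }
  have hdet := det_step _ _ _ _ _ hMinv hm0.
  have hVs : VV *m s = - (X2 *m TT *m invmx X0) - - (X1 *m TT *m invmx Xm1).
  { rewrite hm0. mxlin. }
  have E0' : VV *m (w0 *m invmx X0) = - (X2 *m TT *m invmx X0) - RR by rewrite E0; mxlin.
  have E1' : VV *m (w1 *m invmx X1) = - (X3 *m TT *m invmx X1) - RR by rewrite E1; mxlin.
  have hc : s *m (- (Xm1 *m PP *m invmx X1) *m VV) = w0 *m invmx X0 *m VV - w1 *m invmx X1 *m VV.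
  { apply: (cancelV VV).
    - rewrite (mulmxA VV) hVs mulmxA mulmxBl hMinv (key_identity _ _ _ _ _ _ _ TP0 U0 U1 H1 H2).
      rewrite mulmxBr (mulmxA VV (w0 *m invmx X0)) (mulmxA VV (w1 *m invmx X1)) E0' E1'.
      rewrite !mulmxBl !mulmxDl !mulNmx. mxlin.
    - move=> V0. by rewrite /s V0 !mulmx0 subrr. }
  rewrite hc entB in hdet.
  have hr0 := det_X_rel _ _ _ _ U0 (erefl (- (X2 *m TT *m invmx X0))).
  have hrm1 := det_X_rel _ _ _ _ Um1 (erefl (- (X1 *m TT *m invmx Xm1))).
  have Hq : (-1) ^+ N * \det TT != 0.
  { rewrite mulf_eq0 negb_or signr_eq0 /=.
    have [UT _] := mulmx1_unit TP0. by rewrite unitmxE unitfE in UT. }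
  have := scalar_fin _ _ _ _ ((w0 *m invmx X0 *m VV) 0 0) ((w1 *m invmx X1 *m VV) 0 0)
     (\det X2) (\det Xm1) (\det X1) (\det X0) (elimN eqP Hq) hdet hr0 hrm1.
  exact.
Qed.

Lemma tau_ident z t : (forall k, Xz k t \in unitmx) ->
  tau (Z.add z 2) t * tau (Z.sub z 1) t =
  - ((phiz (Z.add z 1) t - phiz z t - 1) * tau (Z.add z 1) t * tau z t).
Proof.
  move=> HU.
  have Sm1 := Srel (Z.sub z 1) t.
  have S0 := Srel z t.
  have S1 := Srel (Z.add z 1) t.
  have H1 := X3T (Z.sub z 1) t.
  have H2 := X3T (Z.add z 1) t.
  rewrite (_ : Z.add (Z.sub z 1) 2 = Z.add z 1) in Sm1; last by lia.
  rewrite (_ : Z.add (Z.add z 1) 2 = Z.add z 3) in S1; last by lia.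
  rewrite (_ : Z.add (Z.sub z 1) 1 = z) in H1; last by lia.
  rewrite (_ : Z.add (Z.sub z 1) 2 = Z.add z 1) in H1; last by lia.
  rewrite (_ : Z.add (Z.add z 1) 1 = Z.add z 2) in H2; last by lia.
  rewrite (_ : Z.add (Z.add z 1) 2 = Z.add z 3) in H2; last by lia.
  exact: (det_abstract _ _ _ _ _ _ _ _ _ _ _ _ TP (HU _) (HU _) (HU _) Sm1 S0 S1 H1 H2).
Qed.

Lemma tau_derivC z t : Xz z t \in unitmx ->
  cderiv (tau z) t (Cmul (tau z t) (Cadd (Cadd (\tr Rm) (\tr Ti)) (phiz z t))).
Proof. move=> HU. exact: tau_deriv. Qed.

Lemma tau_nz z t : Xz z t \in unitmx -> tau z t <> C0.
Proof. move=> HU. rewrite /tau. apply/eqP. by rewrite unitmxE unitfE in HU. Qed.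

Variables (Xinv : Z -> R -> mat) (lo hi : R).
Hypothesis HX : forall (z : Z) (t : R), Rlt lo t /\ Rlt t hi ->
  is_inverse N (Xmat N A B P Pinv E z t) (Xinv z t).

Lemma aseq_conv z s : Rlt lo s /\ Rlt s hi ->
  aseq M N U V Cm D P Pinv E Xinv z s = Csub (Csub (phiz (Z.add z 1) s) (phiz z s)) C1.
Proof.
  move=> Hs. rewrite /aseq.
  rewrite (phi_conv Xinv (Z.add z 1) s (Xinv_conv _ _ _ (HX _ _ Hs)).2).
  by rewrite (phi_conv Xinv z s (Xinv_conv _ _ _ (HX _ _ Hs)).2).
Qed.

Lemma main_W z t : Rlt lo t /\ Rlt t hi ->
  cderiv (aseq M N U V Cm D P Pinv E Xinv z) t
    (Csub (Cmul (aseq M N U V Cm D P Pinv E Xinv (Z.add z 1) t) (aseq M N U V Cm D P Pinv E Xinv z t))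
          (Cmul (aseq M N U V Cm D P Pinv E Xinv z t) (aseq M N U V Cm D P Pinv E Xinv (Z.sub z 1) t))).
Proof.
  move=> Ht.
  have HU : forall s k, Rlt lo s /\ Rlt s hi -> Xz k s \in unitmx.
  { move=> s k Hs. exact: (Xinv_conv _ _ _ (HX k s Hs)).1. }
  set F := fun s => Cmul (Copp (Cmul (tau (Z.add z 2) s) (tau (Z.sub z 1) s)))
                         (Cinv (Cmul (tau (Z.add z 1) s) (tau z s))).
  apply: (cderiv_loc F _ t lo hi _ Ht).
  { move=> s Hs. rewrite aseq_conv //. rewrite /F.
    apply: esym; apply: a_scalar; [exact: tau_nz (HU _ _ Hs)|exact: tau_nz (HU _ _ Hs)|].
    exact: (tau_ident z s (HU s ^~ Hs)). }
  have D2 := tau_derivC (Z.add z 2) t (HU _ _ Ht).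
  have Dm1 := tau_derivC (Z.sub z 1) t (HU _ _ Ht).
  have D1 := tau_derivC (Z.add z 1) t (HU _ _ Ht).
  have D0 := tau_derivC z t (HU _ _ Ht).
  have Hnz : Cmul (tau (Z.add z 1) t) (tau z t) <> C0.
  { apply: Cmul_neq0; exact: tau_nz (HU _ _ Ht). }
  have DF := cderiv_mul _ _ t _ _ (cderiv_opp _ t _ (cderiv_mul _ _ t _ _ D2 Dm1))
                (cderiv_inv _ t _ Hnz (cderiv_mul _ _ t _ _ D1 D0)).
  apply: cderiv_eq; last exact: DF.
  rewrite !aseq_conv //.
  rewrite (_ : Z.add (Z.add z 1) 1 = Z.add z 2); last by lia.
  rewrite (_ : Z.add (Z.sub z 1) 1 = z); last by lia.
  apply: final_scalar; try exact: tau_nz (HU _ _ Ht).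
  exact: (tau_ident z t (HU t ^~ Ht)).
Qed.

End Main.
End W.


Theorem mainTheorem8
  (M N : nat) (HM : (1 <= M)%nat) (HN : (1 <= N)%nat)
  (P Pinv Rt A B Cm D U V : mat) (E : R -> mat) (Xinv : Z -> R -> mat)
  (lo hi : R) :
  is_inverse N P Pinv ->
  (* Q C + R A = - A P^{-1},  Q D + R B = - B P, with Q = V U^T *)
  meq N N (madd (mmul M (mmul 1 V (mtr U)) Cm) (mmul N Rt A)) (mopp (mmul N A Pinv)) ->
  meq N N (madd (mmul M (mmul 1 V (mtr U)) D) (mmul N Rt B)) (mopp (mmul N B P)) ->
  (forall t : R, is_mexp N (mscal (Cr t) (madd Pinv (mopp P))) (E t)) ->
  lo < hi ->
  (forall (n : Z) (t : R), lo < t < hi ->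
     is_inverse N (Xmat N A B P Pinv E n t) (Xinv n t)) ->
  forall (n : Z) (t : R), lo < t < hi ->
    cderiv (aseq M N U V Cm D P Pinv E Xinv n) t
      (Csub (Cmul (aseq M N U V Cm D P Pinv E Xinv (n + 1)%Z t)
                  (aseq M N U V Cm D P Pinv E Xinv n t))
            (Cmul (aseq M N U V Cm D P Pinv E Xinv n t)
                  (aseq M N U V Cm D P Pinv E Xinv (n - 1)%Z t))).
Proof.
  intros HPinv HS1 HS2 HE Hlh HX n t Ht.
  destruct N as [|N']; [lia|].
  eapply W.main_W; eauto.
Qed.
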